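(* Let $P$ be a complex polynomial of degree $m\ge1$ and let $B\in C^\infty(\mathbb{R},\mathbb{C})$ be constant outside a compact set and such that $\operatorname{Range}(B)\cap P(\{z\in\mathbb{C}:P'(z)=0\})=\emptyset$. Then there exists $g\in C^\infty(\mathbb{R},\mathbb{C})$ with $P\circ g=B$. *)

(* Defs.v *)
From Stdlib Require Import Reals.
From Coquelicot Require Import Coquelicot.
Open Scope R_scope.

Definition poly_eval (a : nat -> C) (m : nat) (z : C) : C :=
  sum_n (fun k => (a k * Cpow z k)%C) m.

Definition poly_deriv_coef (a : nat -> C) : nat -> C :=
  fun k => (RtoC (INR (S k)) * a (S k))%C.

Definition smooth_RC (f : R -> C) : Prop :=
  exists D : nat -> R -> C,
    D 0%nat = f /\ forall (n : nat) (x : R), is_derive (D n) x (D (S n) x).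

Definition const_outside_compact (f : R -> C) : Prop :=
  exists (c : C) (M : R), forall x : R, M < Rabs x -> f x = c.

(* Main.v *)
Require Import Defs.
From Stdlib Require Import Reals.
From Coquelicot Require Import Coquelicot.
From Stdlib Require Import Lra Lia ZArith Classical ClassicalEpsilon.
From HB Require Import structures.
From mathcomp Require all_boot all_algebra Rstruct complex.
Open Scope R_scope.

Module FTA_mc.
Import all_boot all_algebra Rstruct complex.

Definition cmulp (x y : R * R) : R * R :=
  (Rminus (Rmult (fst x) (fst y)) (Rmult (snd x) (snd y)),
   Rplus (Rmult (fst x) (snd y)) (Rmult (snd x) (fst y))).
Definition caddp (x y : R * R) : R * R := (Rplus (fst x) (fst y), Rplus (snd x) (snd y)).
Fixpoint cpowp (x : R * R) (n : nat) : R * R :=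
  match n with O => (IZR 1, IZR 0) | S n => cmulp x (cpowp x n) end.
Fixpoint csump (f : nat -> R * R) (n : nat) : R * R :=
  match n with O => (IZR 0, IZR 0) | S n => caddp (csump f n) (f n) end.

Definition psi (u : R[i]) : R * R := (complex.Re u, complex.Im u).
Definition phi (x : R * R) : R[i] := Complex (fst x) (snd x).

Lemma psi_mul u v : psi (u * v)%R = cmulp (psi u) (psi v).
Proof. by case: u => a b; case: v => c d. Qed.

Lemma psi_add u v : psi (u + v)%R = caddp (psi u) (psi v).
Proof. by case: u => a b; case: v => c d. Qed.

Lemma psi_pow u n : psi (u ^+ n)%R = cpowp (psi u) n.
Proof.
  elim: n => [|n IH]; first by [].
  by rewrite GRing.exprS psi_mul IH.
Qed.

Lemma psi_sum n (F : nat -> R[i]) : psi (\sum_(i < n) F i)%R = csump (fun i => psi (F i)) n.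
Proof.
  elim: n => [|n IH]; first by rewrite big_ord0.
  by rewrite big_ord_recr /= psi_add IH.
Qed.

Lemma psi_phi x : psi (phi x) = x.
Proof. by case: x. Qed.

Lemma eq_csump (f g : nat -> R * R) n : (forall i, f i = g i) -> csump f n = csump g n.
Proof. move=> H; elim: n => [|n IH] //=. by rewrite IH H. Qed.

Lemma fta_pairs n (p : nat -> R * R) : Nat.lt 0 n ->
  exists x : R * R, cpowp x n = csump (fun i => cmulp (p i) (cpowp x i)) n.
Proof.
  move=> Hn.
  have Hn' : (n > 0)%N by apply/ltP.
  have [x Hx] := @complex_acf_axiom R n (fun i => phi (p i)) Hn'.
  exists (psi x).
  rewrite -psi_pow Hx (psi_sum n (fun i => phi (p i) * x ^+ i)%R).
  apply: eq_csump => i.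
  by rewrite psi_mul psi_phi psi_pow.
Qed.

End FTA_mc.
Set Bullet Behavior "Strict Subproofs".
Open Scope R_scope.

Ltac Cring := match goal with |- @eq _ ?x ?y => change (@eq C x y); ring end.
Ltac Cfield := match goal with |- @eq _ ?x ?y => change (@eq C x y); field end.

Lemma plusC (x y : C) : plus x y = Cplus x y. Proof. reflexivity. Qed.

Lemma sum_n_S_C (f : nat -> C) n : sum_n f (S n) = Cplus (sum_n f n) (f (S n)).
Proof. rewrite sum_Sn. reflexivity. Qed.

Lemma sum_n_0_C (f : nat -> C) : sum_n f 0 = f 0%nat.
Proof. apply sum_O. Qed.

Fixpoint Sk (k : nat) (u v : C) : C :=
  match k with O => RtoC 0 | S k => (Cpow u k + v * Sk k u v)%C end.

Lemma pow_diff k u v : (Cpow u k - Cpow v k = (u - v) * Sk k u v)%C.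
Proof.
  induction k as [|k IH]; simpl.
  - ring.
  - replace (u * Cpow u k - v * Cpow v k)%C with
      (Cpow u k * (u - v) + v * (Cpow u k - Cpow v k))%C by ring.
    rewrite IH. ring.
Qed.

Definition Qf (a : nat -> C) (m : nat) (u v : C) : C :=
  sum_n (fun k => a k * Sk k u v)%C m.

Lemma P_diff a m u v :
  (poly_eval a m u - poly_eval a m v = (u - v) * Qf a m u v)%C.
Proof.
  unfold poly_eval, Qf. induction m as [|m IH].
  - rewrite !sum_n_0_C. simpl. ring.
  - rewrite !sum_n_S_C.
    replace (sum_n (fun k : nat => a k * Cpow u k) m + a (S m) * Cpow u (S m) -
      (sum_n (fun k : nat => a k * Cpow v k) m + a (S m) * Cpow v (S m)))%C
    with ((sum_n (fun k : nat => a k * Cpow u k) m - sum_n (fun k : nat => a k * Cpow v k) m)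
          + a (S m) * (Cpow u (S m) - Cpow v (S m)))%C by ring.
    rewrite IH, pow_diff. ring.
Qed.

Lemma Sk_diag k z : Sk (S k) z z = (RtoC (INR (S k)) * Cpow z k)%C.
Proof.
  induction k as [|k IH].
  - simpl. unfold RtoC. apply injective_projections; simpl; ring.
  - change (Sk (S (S k)) z z) with (Cpow z (S k) + z * Sk (S k) z z)%C.
    rewrite IH. rewrite (S_INR (S k)). rewrite RtoC_plus. simpl. ring.
Qed.

Lemma Q_diag a m z : (1 <= m)%nat ->
  Qf a m z z = poly_eval (poly_deriv_coef a) (m - 1) z.
Proof.
  intros Hm. destruct m as [|m]; [lia|]. clear Hm.
  replace (S m - 1)%nat with m by lia.
  unfold Qf, poly_eval, poly_deriv_coef. induction m as [|m IH].
  - rewrite sum_n_S_C, !sum_n_0_C. rewrite Sk_diag. simpl. ring.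
  - rewrite sum_n_S_C, IH, sum_n_S_C. rewrite Sk_diag. ring.
Qed.


Definition cont2 (F : C -> C -> C) (p q : C) : Prop :=
  forall e, 0 < e -> exists d, 0 < d /\ forall u v,
    Cmod (u - p) < d -> Cmod (v - q) < d -> Cmod (F u v - F p q) < e.

Lemma Cmod_sub_tri x y z : Cmod (x - z) <= Cmod (x - y) + Cmod (y - z).
Proof.
  replace (x - z)%C with ((x - y) + (y - z))%C by ring. apply Cmod_triangle.
Qed.

Lemma cont2_const c p q : cont2 (fun _ _ => c) p q.
Proof. intros e He. exists 1. split; [lra|]. intros. replace (c - c)%C with (RtoC 0) by ring.
  rewrite Cmod_0. lra. Qed.

Lemma cont2_fst p q : cont2 (fun u _ => u) p q.
Proof. intros e He. exists e. split; auto. Qed.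

Lemma cont2_snd p q : cont2 (fun _ v => v) p q.
Proof. intros e He. exists e. split; auto. Qed.

Lemma cont2_plus F G p q : cont2 F p q -> cont2 G p q -> cont2 (fun u v => F u v + G u v)%C p q.
Proof.
  intros HF HG e He.
  destruct (HF (e/2)) as [d1 [Hd1 H1]]; [lra|].
  destruct (HG (e/2)) as [d2 [Hd2 H2]]; [lra|].
  exists (Rmin d1 d2). split. { apply Rmin_pos; auto. }
  intros u v Hu Hv.
  assert (A1 := H1 u v (Rlt_le_trans _ _ _ Hu (Rmin_l _ _)) (Rlt_le_trans _ _ _ Hv (Rmin_l _ _))).
  assert (A2 := H2 u v (Rlt_le_trans _ _ _ Hu (Rmin_r _ _)) (Rlt_le_trans _ _ _ Hv (Rmin_r _ _))).
  replace (F u v + G u v - (F p q + G p q))%C with ((F u v - F p q) + (G u v - G p q))%C by ring.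
  eapply Rle_lt_trans; [apply Cmod_triangle|]. lra.
Qed.

Lemma Cmod_mult_diff (x y A B : C) :
  Cmod (x * y - A * B) <= Cmod (x - A) * (Cmod (y - B) + Cmod B) + Cmod A * Cmod (y - B).
Proof.
  replace (x * y - A * B)%C with ((x - A) * ((y - B) + B) + A * (y - B))%C by ring.
  eapply Rle_trans; [apply Cmod_triangle|]. rewrite !Cmod_mult.
  apply Rplus_le_compat_r. apply Rmult_le_compat_l; [apply Cmod_ge_0|]. apply Cmod_triangle.
Qed.

Lemma cont2_mult F G p q : cont2 F p q -> cont2 G p q -> cont2 (fun u v => F u v * G u v)%C p q.
Proof.
  intros HF HG e He.
  set (K := 1 + Cmod (F p q) + Cmod (G p q)).
  assert (HK : 1 <= K) by (unfold K; pose proof (Cmod_ge_0 (F p q)); pose proof (Cmod_ge_0 (G p q)); lra).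
  set (e' := Rmin 1 (e / (2 * K))).
  assert (He' : 0 < e'). { apply Rmin_pos; [lra|]. apply Rdiv_lt_0_compat; lra. }
  destruct (HF e') as [d1 [Hd1 H1]]; [lra|].
  destruct (HG e') as [d2 [Hd2 H2]]; [lra|].
  exists (Rmin d1 d2). split. { apply Rmin_pos; auto. }
  intros u v Hu Hv.
  assert (A1 := H1 u v (Rlt_le_trans _ _ _ Hu (Rmin_l _ _)) (Rlt_le_trans _ _ _ Hv (Rmin_l _ _))).
  assert (A2 := H2 u v (Rlt_le_trans _ _ _ Hu (Rmin_r _ _)) (Rlt_le_trans _ _ _ Hv (Rmin_r _ _))).
  eapply Rle_lt_trans; [apply Cmod_mult_diff|].
  assert (e' <= 1) by apply Rmin_l.
  assert (e' <= e / (2 * K)) by apply Rmin_r.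
  assert (e / (2*K) * K = e/2) by (field; lra).
  pose proof (Cmod_ge_0 (F p q)). pose proof (Cmod_ge_0 (G p q)).
  pose proof (Cmod_ge_0 (F u v - F p q)). pose proof (Cmod_ge_0 (G u v - G p q)).
  assert (Cmod (F u v - F p q) * (Cmod (G u v - G p q) + Cmod (G p q)) <= e' * (1 + Cmod (G p q))).
  { apply Rmult_le_compat; try lra. }
  assert (Cmod (F p q) * Cmod (G u v - G p q) <= Cmod (F p q) * e').
  { apply Rmult_le_compat_l; lra. }
  assert (e' * (1 + Cmod (G p q)) + Cmod (F p q) * e' = e' * K) by (unfold K; ring).
  assert (e' * K <= e / (2*K) * K) by (apply Rmult_le_compat_r; lra).
  lra.
Qed.

Lemma cont2_pow F p q k : cont2 F p q -> cont2 (fun u v => Cpow (F u v) k) p q.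
Proof.
  intros HF. induction k as [|k IH]; simpl.
  - apply cont2_const.
  - apply cont2_mult; auto.
Qed.

Lemma cont2_Sk k p q : cont2 (Sk k) p q.
Proof.
  induction k as [|k IH]; simpl.
  - apply cont2_const.
  - apply cont2_plus. apply (cont2_pow (fun u _ => u)). apply cont2_fst.
    apply cont2_mult; [apply cont2_snd|apply IH].
Qed.

Lemma cont2_ext F G p q : (forall u v, F u v = G u v) -> cont2 F p q -> cont2 G p q.
Proof. intros E H e He. destruct (H e He) as [d [Hd H']]. exists d. split; auto.
  intros u v Hu Hv. rewrite <- !E. auto. Qed.

Lemma cont2_sum (f : nat -> C -> C -> C) n p q :
  (forall k, cont2 (f k) p q) -> cont2 (fun u v => sum_n (fun k => f k u v) n) p q.
Proof.
  intros Hf. induction n as [|n IH].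
  - apply (cont2_ext (f 0%nat)); [intros; now rewrite sum_n_0_C | apply Hf].
  - apply (cont2_ext (fun u v => sum_n (fun k => f k u v) n + f (S n) u v)%C);
      [intros; now rewrite sum_n_S_C|].
    apply cont2_plus; auto.
Qed.

Lemma cont2_Qf a m p q : cont2 (Qf a m) p q.
Proof.
  unfold Qf. apply (cont2_sum (fun k u v => a k * Sk k u v)%C).
  intros k. apply cont2_mult; [apply cont2_const|apply cont2_Sk].
Qed.

Lemma cont2_P a m p q : cont2 (fun u _ => poly_eval a m u) p q.
Proof.
  unfold poly_eval. apply (cont2_sum (fun k u v => a k * Cpow u k)%C).
  intros k. apply cont2_mult; [apply cont2_const|apply (cont2_pow (fun u _ => u)); apply cont2_fst].
Qed.


Lemma sum_n_S_R (f : nat -> R) n : sum_n f (S n) = sum_n f n + f (S n).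
Proof. rewrite sum_Sn. reflexivity. Qed.

Lemma sum_n_nonneg (f : nat -> R) n : (forall k, 0 <= f k) -> 0 <= sum_n f n.
Proof. intros H. induction n. rewrite sum_O. auto. rewrite sum_n_S_R. specialize (H (S n)). lra. Qed.

Lemma pow_ge1 x n : 1 <= x -> 1 <= x ^ n.
Proof. intros H. induction n; simpl. lra. nra. Qed.

Lemma poly_bound b n z :
  Cmod (poly_eval b n z) <= sum_n (fun k => Cmod (b k)) n * (Rmax 1 (Cmod z)) ^ n.
Proof.
  set (X := Rmax 1 (Cmod z)).
  assert (HX1 : 1 <= X) by apply Rmax_l.
  assert (HXz : Cmod z <= X) by apply Rmax_r.
  unfold poly_eval. induction n as [|n IH].
  - rewrite !sum_O. simpl. rewrite Cmod_mult. simpl. rewrite Cmod_1. lra.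
  - rewrite sum_n_S_C, sum_n_S_R.
    eapply Rle_trans; [apply Cmod_triangle|]. rewrite Cmod_mult, Cmod_pow.
    assert (0 <= sum_n (fun k : nat => Cmod (b k)) n) by (apply sum_n_nonneg; intros; apply Cmod_ge_0).
    assert (Cmod z ^ S n <= X ^ S n) by (apply pow_incr; split; [apply Cmod_ge_0|auto]).
    assert (X ^ n <= X ^ S n) by (simpl; pose proof (pow_ge1 X n HX1); nra).
    pose proof (Cmod_ge_0 (b (S n))).
    assert (Cmod (b (S n)) * Cmod z ^ S n <= Cmod (b (S n)) * X ^ S n) by (apply Rmult_le_compat_l; auto).
    assert (sum_n (fun k : nat => Cmod (b k)) n * X ^ n <= sum_n (fun k : nat => Cmod (b k)) n * X ^ S n)
      by (apply Rmult_le_compat_l; auto).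
    nra.
Qed.

Lemma growth (a : nat -> C) m : (1 <= m)%nat -> a m <> 0%C ->
  forall Rb, exists Rz, forall z, Cmod (poly_eval a m z) <= Rb -> Cmod z <= Rz.
Proof.
  intros Hm Ham Rb.
  set (A := sum_n (fun k => Cmod (a k)) (m - 1)).
  set (am := Cmod (a m)).
  assert (Ham' : 0 < am) by (apply (proj1 (Cmod_gt_0 _)); exact Ham).
  assert (HA : 0 <= A) by (apply sum_n_nonneg; intros; apply Cmod_ge_0).
  exists (Rmax 1 ((Rb + A) / am)). intros z Hz.
  destruct (Rle_lt_dec (Cmod z) (Rmax 1 ((Rb + A) / am))) as [H|H]; auto. exfalso.
  assert (H1 : 1 < Cmod z) by (eapply Rle_lt_trans; [apply Rmax_l|exact H]).
  assert (H2 : (Rb + A) / am < Cmod z) by (eapply Rle_lt_trans; [apply Rmax_r|exact H]).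
  assert (H3 : Rb + A < am * Cmod z).
  { apply (Rmult_lt_compat_l am) in H2; auto. replace (am * ((Rb + A) / am)) with (Rb + A) in H2 by (field; lra). lra. }
  replace m with (S (m - 1)) in Hz by lia.
  unfold poly_eval in Hz. rewrite sum_n_S_C in Hz. fold (poly_eval a (m-1) z) in Hz.
  replace (S (m-1)) with m in Hz by lia.
  pose proof (poly_bound a (m-1) z) as Hb. fold A in Hb.
  rewrite Rmax_right in Hb by lra.
  assert (Ht : Cmod (a m * Cpow z m) <= Cmod (poly_eval a (m - 1) z + a m * Cpow z m) + Cmod (poly_eval a (m - 1) z)).
  { replace (a m * Cpow z m)%C with ((poly_eval a (m - 1) z + a m * Cpow z m) + - poly_eval a (m - 1) z)%C at 1 by ring.
    eapply Rle_trans; [apply Cmod_triangle|]. rewrite Cmod_opp. lra. }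
  rewrite Cmod_mult, Cmod_pow in Ht. fold am in Ht.
  replace m with (S (m - 1)) in Ht at 1 by lia. simpl in Ht.
  assert (HY : 1 <= Cmod z ^ (m - 1)) by (apply pow_ge1; lra).
  set (Y := Cmod z ^ (m - 1)) in *.
  pose proof (Cmod_ge_0 (poly_eval a (m - 1) z + a m * Cpow z m)). assert (0 <= (Y - 1) * (am * Cmod z - A)) by (apply Rmult_le_pos; lra). nra.
Qed.


Definition cont1 (f : R -> C) (x : R) : Prop :=
  forall e, 0 < e -> exists d, 0 < d /\ forall y, Rabs (y - x) < d -> Cmod (f y - f x) < e.

Lemma Cmod_le_max (z : C) : Cmod z <= 2 * Rmax (Rabs (fst z)) (Rabs (snd z)).
Proof.
  eapply Rle_trans; [apply Cmod_2Rmax|]. apply Rmult_le_compat_r.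
  - eapply Rle_trans; [apply Rabs_pos|apply Rmax_l].
  - rewrite <- sqrt_4 at 1 || idtac. 
    assert (sqrt 2 < 2). { rewrite <- (sqrt_Rsqr 2) at 2 by lra. apply sqrt_lt_1; unfold Rsqr; lra. }
    lra.
Qed.

Lemma continuous_cont1 (f : R -> C) x : continuous f x -> cont1 f x.
Proof.
  intros Hc e He.
  assert (He2 : 0 < e / 2) by lra.
  destruct (proj1 (filterlim_locally f (f x)) Hc (mkposreal _ He2)) as [d Hd].
  exists d. split; [apply cond_pos|]. intros y Hy.
  specialize (Hd y Hy). destruct Hd as [H1 H2].
  change (Rabs (fst (f y) - fst (f x)) < e/2) in H1.
  change (Rabs (snd (f y) - snd (f x)) < e/2) in H2.
  eapply Rle_lt_trans; [apply Cmod_le_max|]. simpl.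
  unfold Rminus in H1, H2. unfold Rmax. destruct Rle_dec; lra.
Qed.

Lemma deriv_cont1 (f : R -> C) x l : is_derive f x l -> cont1 f x.
Proof.
  intros H. pose proof (ex_derive_continuous f x (ex_intro _ l H)) as Hc.
  apply continuous_cont1. exact Hc.
Qed.

Lemma cont1_Cmod_pt (f : R -> C) w x : cont1 f x -> continuity_pt (fun y => Cmod (f y - w)) x.
Proof.
  intros Hc e He. destruct (Hc e He) as [d [Hd H]]. exists d. split; [lra|].
  intros y [_ Hy]. simpl in *. unfold R_dist in *.
  specialize (H y Hy).
  eapply Rle_lt_trans; [|exact H].
  assert (T1 := Cmod_sub_tri (f y - w) (f x - w) 0).
  assert (T2 := Cmod_sub_tri (f x - w) (f y - w) 0).
  replace (f y - w - (f x - w))%C with (f y - f x)%C in T1 by ring.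
  replace (f x - w - (f y - w))%C with (- (f y - f x))%C in T2 by ring.
  rewrite Cmod_opp in T2.
  replace (f y - w - 0)%C with (f y - w)%C in T1 by ring.
  replace (f x - w - 0)%C with (f x - w)%C in T1, T2 by ring.
  replace (f y - w - 0)%C with (f y - w)%C in T2 by ring.
  unfold Rabs. destruct Rcase_abs; lra.
Qed.

Section BFacts.
Variable B : R -> C.
Variable c : C.
Variable M : R.
Hypothesis HBc : forall x, cont1 B x.
Hypothesis HBk : forall x, M < Rabs x -> B x = c.

Lemma HM0 : exists M', 0 <= M' /\ forall x, M' < Rabs x -> B x = c.
Proof. exists (Rmax 0 M). split; [apply Rmax_l|]. intros x Hx. apply HBk.
  eapply Rle_lt_trans; [apply Rmax_r|exact Hx]. Qed.

Lemma B_min_dist w : (forall x, B x <> w) -> exists eta, 0 < eta /\ forall x, eta <= Cmod (B x - w).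
Proof.
  intros Hw. destruct HM0 as [M' [HM' HK]].
  destruct (continuity_ab_min (fun y => Cmod (B y - w)) (-(M'+1)) (M'+1)) as [x0 [Hx0 Hr]].
  { lra. }
  { intros y _. apply cont1_Cmod_pt. apply HBc. }
  exists (Cmod (B x0 - w)). split.
  - apply Cmod_gt_0. intros E. apply (Hw x0). apply Ceq_minus. exact E.
  - intros x. destruct (Rle_lt_dec (Rabs x) M') as [H|H].
    + apply Hx0. unfold Rabs in H. destruct Rcase_abs in H; lra.
    + rewrite (HK x H). rewrite <- (HK (M'+1)) by (rewrite Rabs_right; lra).
      apply Hx0. lra.
Qed.

Lemma B_bounded : exists Rb, forall x, Cmod (B x) <= Rb.
Proof.
  destruct HM0 as [M' [HM' HK]].
  destruct (continuity_ab_maj (fun y => Cmod (B y - 0)) (-(M'+1)) (M'+1)) as [x0 [Hx0 Hr]].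
  { lra. }
  { intros y _. apply cont1_Cmod_pt. apply HBc. }
  exists (Cmod (B x0 - 0)). intros x.
  replace (B x) with (B x - 0)%C by ring.
  destruct (Rle_lt_dec (Rabs x) M') as [H|H].
  + apply Hx0. unfold Rabs in H. destruct Rcase_abs in H; lra.
  + rewrite (HK x H). rewrite <- (HK (M'+1)) by (rewrite Rabs_right; lra).
    apply Hx0. lra.
Qed.

Lemma B_unif_cont : forall e, 0 < e -> exists d, 0 < d /\ forall x y, Rabs (x - y) < d -> Cmod (B x - B y) < e.
Proof.
  intros e He.
  destruct HM0 as [M' [HM' HK]].
  assert (Hd : forall t, exists d : posreal, forall y, Rabs (y - t) < 2 * d -> Cmod (B y - B t) < e / 2).
  { intros t. destruct (HBc t (e/2)) as [d [Hd H]]; [lra|].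
    assert (0 < d/2) by lra. exists (mkposreal _ H0). simpl. intros y Hy. apply H. lra. }
  destruct (choice _ Hd) as [delta Hdelta].
  destruct (compactness_value_1d (-(M'+1)) (M'+1) delta) as [d Hcd].
  exists (Rmin d 1). split. { apply Rmin_pos; [apply cond_pos|lra]. }
  intros x y Hxy.
  assert (Hd1 : Rabs (x - y) < d) by (eapply Rlt_le_trans; [exact Hxy|apply Rmin_l]).
  assert (Hd2 : Rabs (x - y) < 1) by (eapply Rlt_le_trans; [exact Hxy|apply Rmin_r]).
  destruct (Rle_lt_dec (Rabs x) (M'+1)) as [H|H].
  - apply NNPP. intros Hn. apply (Hcd x).
    { unfold Rabs in H. destruct Rcase_abs in H; lra. }
    intros [t [Ht [Hxt Hdt]]].
    apply Hn.
    pose proof (cond_pos (delta t)). assert (A1 := Hdelta t x). assert (A2 := Hdelta t y).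
    assert (Rabs (y - t) < 2 * delta t).
    { replace (y - t) with ((y - x) + (x - t)) by ring.
      eapply Rle_lt_trans; [apply Rabs_triang|]. rewrite Rabs_minus_sym. lra. }
    specialize (A1 ltac:(lra)). specialize (A2 H1).
    eapply Rle_lt_trans; [apply (Cmod_sub_tri _ (B t))|].
    replace (B t - B y)%C with (- (B y - B t))%C by ring. rewrite Cmod_opp. lra.
  - assert (M' < Rabs y).
    { replace y with (x - (x - y)) by ring.
      assert (T := Rabs_triang_inv x (x - y)). lra. }
    rewrite (HK x) by lra. rewrite (HK y) by lra.
    replace (c - c)%C with (RtoC 0) by ring. rewrite Cmod_0. lra.
Qed.

End BFacts.


Lemma Cmod_lt_2max (z : C) e : Rabs (fst z) < e -> Rabs (snd z) < e -> Cmod z < 2 * e.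
Proof.
  intros H1 H2. eapply Rle_lt_trans; [apply Cmod_le_max|].
  unfold Rmax. destruct Rle_dec; lra.
Qed.

Lemma Cmod_fst_le (z : C) : Rabs (fst z) <= Cmod z.
Proof. eapply Rle_trans; [apply Rmax_l|apply Rmax_Cmod]. Qed.
Lemma Cmod_snd_le (z : C) : Rabs (snd z) <= Cmod z.
Proof. eapply Rle_trans; [apply Rmax_r|apply Rmax_Cmod]. Qed.

Section Key.
Variable a : nat -> C.
Variable m : nat.
Hypothesis Hm : (1 <= m)%nat.
Hypothesis Ham : a m <> 0%C.
Variable B : R -> C.
Variable c : C.
Variable M : R.
Hypothesis HBc : forall x, cont1 B x.
Hypothesis HBk : forall x, M < Rabs x -> B x = c.
Hypothesis Hcrit : forall x z, Qf a m z z = 0%C -> B x <> poly_eval a m z.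

Definition Good (zt : C) (d : R) : Prop :=
  forall x z0, poly_eval a m z0 = B x -> Cmod (z0 - zt) < 2 * d ->
    d <= Cmod (Qf a m z0 z0) /\
    forall z z', Cmod (z - z0) < d -> Cmod (z' - z0) < d ->
      Cmod (Qf a m z z' - Qf a m z0 z0) <= Cmod (Qf a m z0 z0) / 3.

Lemma Good_pt zt : exists d : posreal, Good zt d.
Proof.
  destruct (Ceq_dec (Qf a m zt zt) 0) as [H0|H0].
  - destruct (B_min_dist B c M HBc HBk (poly_eval a m zt)) as [eta [Heta Hd]].
    { intros x. apply Hcrit. exact H0. }
    destruct (cont2_P a m zt zt eta Heta) as [d0 [Hd0 Hc]].
    assert (0 < d0 / 2) by lra. exists (mkposreal _ H). intros x z0 Hz0 Hd'. simpl in Hd'.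
    exfalso. specialize (Hc z0 zt ltac:(lra)).
    replace (zt - zt)%C with (RtoC 0) in Hc by ring. rewrite Cmod_0 in Hc. specialize (Hc Hd0).
    specialize (Hd x). rewrite <- Hz0 in Hd. lra.
  - set (p := Cmod (Qf a m zt zt)).
    assert (Hp : 0 < p) by (apply (proj1 (Cmod_gt_0 _)); exact H0).
    destruct (cont2_Qf a m zt zt (p/10)) as [d0 [Hd0 Hc]]; [lra|].
    set (d := Rmin (d0/3) (p/2)).
    assert (Hd : 0 < d) by (apply Rmin_pos; lra).
    assert (Hd1 : d <= d0/3) by apply Rmin_l.
    assert (Hd2 : d <= p/2) by apply Rmin_r.
    exists (mkposreal _ Hd). simpl. intros x z0 _ Hz0.
    assert (A0 : Cmod (Qf a m z0 z0 - Qf a m zt zt) < p / 10) by (apply Hc; lra).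
    assert (A1 : 0.9 * p <= Cmod (Qf a m z0 z0)).
    { assert (T := Cmod_sub_tri (Qf a m zt zt) (Qf a m z0 z0) 0).
      replace (Qf a m zt zt - Qf a m z0 z0)%C with (- (Qf a m z0 z0 - Qf a m zt zt))%C in T by ring.
      rewrite Cmod_opp in T. replace (Qf a m zt zt - 0)%C with (Qf a m zt zt) in T by ring.
      replace (Qf a m z0 z0 - 0)%C with (Qf a m z0 z0) in T by ring. fold p in T. lra. }
    split; [lra|].
    intros z z' Hz Hz'.
    assert (B1 : Cmod (z - zt) < d0) by (assert (T := Cmod_sub_tri z z0 zt); lra).
    assert (B2 : Cmod (z' - zt) < d0) by (assert (T := Cmod_sub_tri z' z0 zt); lra).
    specialize (Hc z z' B1 B2).
    assert (T := Cmod_sub_tri (Qf a m z z') (Qf a m zt zt) (Qf a m z0 z0)).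
    replace (Qf a m zt zt - Qf a m z0 z0)%C with (- (Qf a m z0 z0 - Qf a m zt zt))%C in T by ring.
    rewrite Cmod_opp in T. lra.
Qed.

Lemma KEY : exists r, 0 < r /\ forall x z0, poly_eval a m z0 = B x ->
    r <= Cmod (Qf a m z0 z0) /\
    forall z z', Cmod (z - z0) < r -> Cmod (z' - z0) < r ->
      Cmod (Qf a m z z' - Qf a m z0 z0) <= Cmod (Qf a m z0 z0) / 3.
Proof.
  destruct (B_bounded B c M HBc HBk) as [Rb HRb].
  destruct (growth a m Hm Ham Rb) as [Rz HRz].
  assert (Hgd : forall t : Compactness.Tn 2 R, exists d : posreal,
             Good (fst t, fst (snd t)) d).
  { intros t. apply Good_pt. }
  destruct (choice _ Hgd) as [delta Hdelta].
  destruct (compactness_value 2 (-Rz, (-Rz, tt)) (Rz, (Rz, tt)) delta) as [d Hcd].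
  exists d. split; [apply cond_pos|].
  intros x z0 Hz0.
  assert (Hb : Cmod z0 <= Rz) by (apply HRz; rewrite Hz0; apply HRb).
  apply NNPP. intros Hn. apply (Hcd (fst z0, (snd z0, tt))).
  { simpl. pose proof (Cmod_fst_le z0). pose proof (Cmod_snd_le z0).
    unfold Rabs in *. repeat destruct Rcase_abs; repeat split; lra. }
  intros [t [Ht [Hcl Hdt]]]. apply Hn.
  destruct t as [t1 [t2 []]]. simpl in Hcl. destruct Hcl as [Hc1 [Hc2 _]].
  specialize (Hdelta (t1, (t2, tt))). simpl in Hdelta, Hdt.
  assert (Hz : Cmod (z0 - (t1, t2)) < 2 * delta (t1, (t2, tt))).
  { apply Cmod_lt_2max; simpl; [exact Hc1|exact Hc2]. }
  destruct (Hdelta x z0 Hz0 Hz) as [G1 G2].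
  split; [lra|].
  intros z z' H1 H2. apply G2; lra.
Qed.

End Key.


Section Contr.
Variable T : C -> C.
Variable z0 : C.
Variable s : R.
Hypothesis Hs : 0 < s.
Hypothesis HL : forall z z', Cmod (z - z0) <= s -> Cmod (z' - z0) <= s ->
  Cmod (T z - T z') <= / 3 * Cmod (z - z').
Hypothesis HS : forall z, Cmod (z - z0) <= s -> Cmod (T z - z0) <= s.

Fixpoint zs (n : nat) : C := match n with O => z0 | S n => T (zs n) end.

Lemma zs_in n : Cmod (zs n - z0) <= s.
Proof. induction n; simpl. replace (z0 - z0)%C with (RtoC 0) by ring. rewrite Cmod_0. lra. auto. Qed.

Let D := Cmod (zs 1 - z0).

Lemma zs_step n : Cmod (zs (S n) - zs n) <= (/3) ^ n * D.
Proof.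
  induction n. simpl. unfold D. simpl. lra.
  change (zs (S (S n))) with (T (zs (S n))). change (zs (S n)) with (T (zs n)) at 2.
  eapply Rle_trans; [apply HL; apply zs_in|]. simpl in IHn |- *. lra.
Qed.

Lemma zs_tail N k : Cmod (zs (N + k) - zs N) <= 3/2 * (/3)^N * D * (1 - (/3)^k).
Proof.
  induction k.
  - rewrite Nat.add_0_r. replace (zs N - zs N)%C with (RtoC 0) by ring. rewrite Cmod_0. simpl. lra.
  - replace (N + S k)%nat with (S (N + k)) by lia.
    eapply Rle_trans; [apply (Cmod_sub_tri _ (zs (N + k)))|].
    pose proof (zs_step (N + k)). rewrite pow_add in H.
    replace (3 / 2 * (/ 3) ^ N * D * (1 - (/ 3) ^ S k)) with
      (3 / 2 * (/ 3) ^ N * D * (1 - (/ 3) ^ k) + (/ 3) ^ N * (/ 3) ^ k * D) by (simpl; field).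
    lra.
Qed.

Lemma D_nonneg : 0 <= D. Proof. apply Cmod_ge_0. Qed.

Lemma zs_cauchy N n k : (N <= n)%nat -> (N <= k)%nat -> Cmod (zs n - zs k) <= 3 * (/3)^N * D.
Proof.
  intros Hn Hk.
  assert (A : forall j, (N <= j)%nat -> Cmod (zs j - zs N) <= 3/2 * (/3)^N * D).
  { intros j Hj. replace j with (N + (j - N))%nat by lia.
    eapply Rle_trans; [apply zs_tail|].
    assert (0 <= (/3)^(j - N)) by (apply pow_le; lra).
    assert (0 <= (/3)^N) by (apply pow_le; lra).
    pose proof D_nonneg.
    assert (0 <= 3 / 2 * (/ 3) ^ N * D * (/ 3) ^ (j - N)).
    { repeat apply Rmult_le_pos; lra. }
    nra. }
  eapply Rle_trans; [apply (Cmod_sub_tri _ (zs N))|].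
  replace (zs N - zs k)%C with (- (zs k - zs N))%C by ring. rewrite Cmod_opp.
  pose proof (A n Hn). pose proof (A k Hk). lra.
Qed.

Lemma geom_small e : 0 < e -> exists N, 3 * (/3)^N * D < e.
Proof.
  intros He.
  destruct (pow_lt_1_zero (/3) ltac:(rewrite Rabs_right; lra) (e / (3 * (D + 1)))) as [N HN].
  { pose proof D_nonneg. apply Rdiv_lt_0_compat; lra. }
  exists N. specialize (HN N (le_n _)). rewrite Rabs_right in HN by (apply Rle_ge, pow_le; lra).
  pose proof D_nonneg.
  assert (0 <= (/3)^N) by (apply pow_le; lra).
  assert ((/ 3) ^ N * (3 * (D + 1)) < e).
  { apply (Rmult_lt_compat_r (3 * (D + 1))) in HN; [|lra].
    replace (e / (3 * (D + 1)) * (3 * (D + 1))) with e in HN by (field; lra). lra. }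
  nra.
Qed.

Lemma contraction : exists zf, Cmod (zf - z0) <= s /\ T zf = zf.
Proof.
  assert (C1 : Cauchy_crit (fun n => fst (zs n))).
  { intros e He. destruct (geom_small e He) as [N HN]. exists N. intros n k Hn Hk.
    unfold Rdist. eapply Rle_lt_trans; [|exact HN].
    eapply Rle_trans; [|apply (zs_cauchy N n k Hn Hk)].
    apply (Cmod_fst_le (zs n - zs k)). }
  assert (C2 : Cauchy_crit (fun n => snd (zs n))).
  { intros e He. destruct (geom_small e He) as [N HN]. exists N. intros n k Hn Hk.
    unfold Rdist. eapply Rle_lt_trans; [|exact HN].
    eapply Rle_trans; [|apply (zs_cauchy N n k Hn Hk)].
    apply (Cmod_snd_le (zs n - zs k)). }
  destruct (Rcomplete.R_complete _ C1) as [l1 Hl1].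
  destruct (Rcomplete.R_complete _ C2) as [l2 Hl2].
  set (zf := (l1, l2) : C).
  assert (Hcv : forall e, 0 < e -> exists N, forall n, (N <= n)%nat -> Cmod (zs n - zf) < e).
  { intros e He. destruct (Hl1 (e/2)) as [N1 H1]; [lra|]. destruct (Hl2 (e/2)) as [N2 H2]; [lra|].
    exists (Nat.max N1 N2). intros n Hn.
    replace e with (2 * (e/2)) by field.
    apply Cmod_lt_2max; simpl.
    - apply H1. lia.
    - apply H2. lia. }
  assert (Hin : Cmod (zf - z0) <= s).
  { apply Rnot_lt_le. intros Hlt.
    destruct (Hcv (Cmod (zf - z0) - s)) as [N HN]; [lra|].
    specialize (HN N (le_n _)). pose proof (zs_in N).
    assert (T1 := Cmod_sub_tri zf (zs N) z0).
    replace (zf - zs N)%C with (- (zs N - zf))%C in T1 by ring. rewrite Cmod_opp in T1. lra. }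
  exists zf. split; auto.
  apply Ceq_minus. apply Cmod_eq_0.
  apply Rle_antisym; [|apply Cmod_ge_0].
  apply Rnot_lt_le. intros Hlt. set (g := Cmod (T zf - zf)) in *.
  destruct (Hcv (g/2)) as [N HN]; [lra|].
  assert (A1 := HN N (le_n _)). assert (A2 := HN (S N) ltac:(lia)).
  simpl in A2.
  assert (A3 := HL zf (zs N) Hin (zs_in N)).
  assert (T1 := Cmod_sub_tri (T zf) (T (zs N)) zf).
  replace (zf - zs N)%C with (- (zs N - zf))%C in A3 by ring. rewrite Cmod_opp in A3.
  fold g in T1. lra.
Qed.

End Contr.

Section Local.
Variable a : nat -> C.
Variable m : nat.
Variable z0 : C.
Variable r : R.
Hypothesis Hr : 0 < r.
Hypothesis Hc0 : r <= Cmod (Qf a m z0 z0).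
Hypothesis HQ : forall z z', Cmod (z - z0) < r -> Cmod (z' - z0) < r ->
      Cmod (Qf a m z z' - Qf a m z0 z0) <= Cmod (Qf a m z0 z0) / 3.

Lemma local_lip z z' : Cmod (z - z0) < r -> Cmod (z' - z0) < r ->
  2 * r / 3 * Cmod (z - z') <= Cmod (poly_eval a m z - poly_eval a m z').
Proof.
  intros H1 H2. rewrite P_diff, Cmod_mult.
  specialize (HQ z z' H1 H2).
  assert (T := Cmod_sub_tri (Qf a m z0 z0) (Qf a m z z') 0).
  replace (Qf a m z0 z0 - Qf a m z z')%C with (- (Qf a m z z' - Qf a m z0 z0))%C in T by ring.
  rewrite Cmod_opp in T. replace (Qf a m z0 z0 - 0)%C with (Qf a m z0 z0) in T by ring.
  replace (Qf a m z z' - 0)%C with (Qf a m z z') in T by ring.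
  pose proof (Cmod_ge_0 (z - z')).
  assert (2 * r / 3 <= Cmod (Qf a m z z')) by lra.
  rewrite (Rmult_comm (Cmod (z - z'))). apply Rmult_le_compat_r; lra.
Qed.

Lemma local_exists w : Cmod (w - poly_eval a m z0) < r * r / 6 ->
  exists z, Cmod (z - z0) < r / 2 /\ poly_eval a m z = w.
Proof.
  intros Hw.
  set (c0 := Qf a m z0 z0).
  assert (Hc1 : r <= Cmod c0) by exact Hc0.
  assert (Hc0' : c0 <> 0%C). { intros E. rewrite E, Cmod_0 in Hc1. lra. }
  set (T := fun z => (z - (poly_eval a m z - w) / c0)%C).
  destruct (contraction T z0 (r/3)) as [zf [Hzf Hfix]].
  - lra.
  - intros z z' H1 H2.
    assert (E : (T z - T z' = (z - z') * ((c0 - Qf a m z z') / c0))%C).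
    { unfold T. assert (EP : poly_eval a m z = (poly_eval a m z' + (z - z') * Qf a m z z')%C).
      { rewrite <- P_diff. ring. }
      rewrite EP. field. auto. }
    rewrite E, Cmod_mult, Cmod_div by auto.
    specialize (HQ z z' ltac:(lra) ltac:(lra)).
    replace (c0 - Qf a m z z')%C with (- (Qf a m z z' - c0))%C by ring. rewrite Cmod_opp.
    assert (Hp : 0 < Cmod c0) by lra.
    assert (Cmod (Qf a m z z' - c0) / Cmod c0 <= /3).
    { unfold Rdiv. apply (Rmult_le_reg_r (Cmod c0)); auto.
      rewrite Rmult_assoc, Rinv_l by lra. fold c0 in HQ. lra. }
    pose proof (Cmod_ge_0 (z - z')). nra.
  - intros z Hz.
    assert (E : (T z - z0 = (z - z0) * ((c0 - Qf a m z z0) / c0) + (w - poly_eval a m z0) / c0)%C).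
    { unfold T. assert (EP : poly_eval a m z = (poly_eval a m z0 + (z - z0) * Qf a m z z0)%C).
      { rewrite <- P_diff. ring. }
      rewrite EP. field. auto. }
    rewrite E. eapply Rle_trans; [apply Cmod_triangle|].
    rewrite Cmod_mult, !Cmod_div by auto.
    assert (Hz0 : Cmod (z0 - z0) < r) by (replace (z0 - z0)%C with (RtoC 0) by ring; rewrite Cmod_0; lra).
    specialize (HQ z z0 ltac:(lra) Hz0).
    replace (c0 - Qf a m z z0)%C with (- (Qf a m z z0 - c0))%C by ring. rewrite Cmod_opp.
    assert (Hp : 0 < Cmod c0) by lra.
    assert (Cmod (Qf a m z z0 - c0) / Cmod c0 <= /3).
    { unfold Rdiv. apply (Rmult_le_reg_r (Cmod c0)); auto.
      rewrite Rmult_assoc, Rinv_l by lra. fold c0 in HQ. lra. }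
    assert (Cmod (w - poly_eval a m z0) / Cmod c0 <= r / 6).
    { unfold Rdiv. apply (Rmult_le_reg_r (Cmod c0)); auto.
      rewrite Rmult_assoc, Rinv_l by lra. nra. }
    pose proof (Cmod_ge_0 (z - z0)). nra.
  - exists zf. split; [lra|].
    unfold T in Hfix.
    assert (E : ((poly_eval a m zf - w) / c0 = 0)%C).
    { apply (f_equal (fun u => zf - u)%C) in Hfix. 
      replace (zf - (zf - (poly_eval a m zf - w) / c0))%C with ((poly_eval a m zf - w) / c0)%C in Hfix by ring.
      rewrite Hfix. ring. }
    apply Ceq_minus.
    replace (poly_eval a m zf - w)%C with (((poly_eval a m zf - w) / c0) * c0)%C by (field; auto).
    rewrite E. ring.
Qed.

End Local.



Lemma cpowp_Cpow x n : FTA_mc.cpowp x n = Cpow x n.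
Proof. induction n; simpl; [reflexivity|]. rewrite IHn. reflexivity. Qed.

Lemma csump_sum (f : nat -> C) k : FTA_mc.csump f (S k) = sum_n f k.
Proof.
  induction k.
  - rewrite sum_n_0_C. simpl. unfold FTA_mc.caddp. simpl. apply injective_projections; simpl; ring.
  - change (FTA_mc.csump f (S (S k))) with (FTA_mc.caddp (FTA_mc.csump f (S k)) (f (S k))).
    rewrite IHk, sum_n_S_C. reflexivity.
Qed.

Lemma sum_n_scal (c : C) (f : nat -> C) k : sum_n (fun i => c * f i)%C k = (c * sum_n f k)%C.
Proof.
  induction k. rewrite !sum_n_0_C. reflexivity.
  rewrite !sum_n_S_C, IHk. Cring.
Qed.

Lemma sum_n_plus (f g : nat -> C) k : sum_n (fun i => f i + g i)%C k = (sum_n f k + sum_n g k)%C.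
Proof.
  induction k. rewrite !sum_n_0_C. reflexivity.
  rewrite !sum_n_S_C, IHk. Cring.
Qed.

Lemma sum_n_ext_C (f g : nat -> C) k : (forall i, f i = g i) -> sum_n f k = sum_n g k.
Proof.
  intros H. induction k. rewrite !sum_n_0_C. auto.
  rewrite !sum_n_S_C, IHk, H. reflexivity.
Qed.

Lemma fta_poly (a : nat -> C) m w : (1 <= m)%nat -> a m <> 0%C ->
  exists z, poly_eval a m z = w.
Proof.
  intros Hm Ham.
  set (b := fun i => if Nat.eq_dec i 0 then (a 0%nat - w)%C else a i).
  assert (Hb0 : b 0%nat = (a 0%nat - w)%C) by (unfold b; destruct (Nat.eq_dec 0 0); [reflexivity|lia]).
  assert (HbS : forall i, b (S i) = a (S i)) by (intros i; unfold b; destruct (Nat.eq_dec (S i) 0); [lia|reflexivity]).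
  set (p := fun i => (- b i / a m)%C).
  destruct (FTA_mc.fta_pairs m p ltac:(lia)) as [z Hz].
  exists z.
  rewrite cpowp_Cpow in Hz.
  replace m with (S (m - 1)) in Hz at 2 by lia.
  assert (Hz' : Cpow z m = sum_n (fun i => p i * Cpow z i)%C (m - 1)).
  { rewrite Hz. rewrite <- csump_sum. apply FTA_mc.eq_csump. intros i. rewrite cpowp_Cpow. reflexivity. }
  clear Hz.
  assert (E1 : (poly_eval a m z - w = sum_n (fun i => b i * Cpow z i)%C (m - 1) + a m * Cpow z m)%C).
  { unfold poly_eval. replace m with (S (m - 1)) at 1 by lia. rewrite sum_n_S_C.
    replace (S (m - 1)) with m by lia.
    assert (forall k, (sum_n (fun k0 : nat => a k0 * Cpow z k0) k - w = sum_n (fun i : nat => b i * Cpow z i) k)%C).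
    { induction k.
      - rewrite !sum_n_0_C. rewrite Hb0. simpl. ring.
      - rewrite !sum_n_S_C. rewrite <- IHk. rewrite HbS. Cring. }
    rewrite <- H. Cring. }
  rewrite Hz' in E1. rewrite <- sum_n_scal, <- sum_n_plus in E1.
  rewrite (sum_n_ext_C _ (fun _ => RtoC 0)) in E1.
  - assert (forall k, sum_n (fun _ : nat => RtoC 0) k = RtoC 0).
    { induction k. rewrite sum_n_0_C. reflexivity. rewrite sum_n_S_C, IHk. Cring. }
    rewrite H in E1. apply Ceq_minus. exact E1.
  - intros i. unfold p. field. exact Ham.
Qed.


Lemma prod_norm_Cmod (z : C) :
  @norm R_AbsRing (prod_NormedModule R_AbsRing R_NormedModule R_NormedModule) z = Cmod z.
Proof.
  change (sqrt (Rabs (fst z) ^ 2 + Rabs (snd z) ^ 2) = Cmod z).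
  unfold Cmod. rewrite <- !RPow_abs, !Rabs_sqr_eq_compat || idtac.
  f_equal. rewrite <- (pow2_abs (fst z)), <- (pow2_abs (snd z)). reflexivity.
Qed.

Lemma scal_C (t : R) (l : C) :
  @scal R_Ring (prod_ModuleSpace R_Ring R_ModuleSpace R_ModuleSpace) t l = (RtoC t * l)%C.
Proof.
  apply injective_projections; simpl; unfold scal; simpl; unfold mult; simpl; ring.
Qed.

Lemma is_derive_eps (f : R -> C) x l :
  (forall e, 0 < e -> exists d, 0 < d /\ forall y, Rabs (y - x) < d ->
     Cmod (f y - f x - RtoC (y - x) * l) <= e * Rabs (y - x)) -> is_derive f x l.
Proof.
  intros H. split.
  - apply is_linear_scal_l.
  - intros x' Hx'. apply (@is_filter_lim_locally_unique R_AbsRing R_NormedModule) in Hx'. subst x'.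
    intros eps. destruct (H eps (cond_pos eps)) as [d [Hd Hy]].
    exists (mkposreal d Hd). intros y Hby. simpl in Hby.
    change (Rabs (y - x) < d) in Hby.
    rewrite prod_norm_Cmod. rewrite scal_C.
    change (norm (minus y x)) with (Rabs (y - x)).
    specialize (Hy y Hby).
    eapply Rle_trans; [|exact Hy]. right. f_equal.
Qed.

Lemma eps_is_derive (f : R -> C) x l : is_derive f x l ->
  forall e, 0 < e -> exists d, 0 < d /\ forall y, Rabs (y - x) < d ->
     Cmod (f y - f x - RtoC (y - x) * l) <= e * Rabs (y - x).
Proof.
  intros [_ H] e He.
  destruct (H x (fun P HP => HP) (mkposreal e He)) as [d Hd].
  exists d. split; [apply cond_pos|]. intros y Hy.
  specialize (Hd y Hy). simpl in Hd.
  rewrite prod_norm_Cmod, scal_C in Hd.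
  change (norm (minus y x)) with (Rabs (y - x)) in Hd.
  eapply Rle_trans; [|exact Hd]. right. f_equal.
Qed.


Lemma cont1_comp2 (F : C -> C -> C) (u v : R -> C) x :
  cont2 F (u x) (v x) -> cont1 u x -> cont1 v x -> cont1 (fun y => F (u y) (v y)) x.
Proof.
  intros HF Hu Hv e He. destruct (HF e He) as [d [Hd H]].
  destruct (Hu d Hd) as [d1 [Hd1 H1]]. destruct (Hv d Hd) as [d2 [Hd2 H2]].
  exists (Rmin d1 d2). split; [apply Rmin_pos; auto|]. intros y Hy.
  apply H; [apply H1|apply H2]; eapply Rlt_le_trans; eauto; [apply Rmin_l|apply Rmin_r].
Qed.

Lemma cont1_const (k : C) x : cont1 (fun _ => k) x.
Proof. intros e He. exists 1. split; [lra|]. intros. replace (k - k)%C with (RtoC 0) by ring. rewrite Cmod_0. lra. Qed.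

Lemma cont1_mult (F G : R -> C) x : cont1 F x -> cont1 G x -> cont1 (fun y => F y * G y)%C x.
Proof.
  intros HF HG. apply (cont1_comp2 (fun u v => u * v)%C); auto.
  apply cont2_mult; [apply cont2_fst|apply cont2_snd].
Qed.

Lemma cont2_inv (p q : C) : p <> 0%C -> cont2 (fun u _ => / u)%C p q.
Proof.
  intros Hp e He. set (A := Cmod p).
  assert (HA : 0 < A) by (apply (proj1 (Cmod_gt_0 _)); exact Hp).
  exists (Rmin (A/2) (e * (A * A) / 2)). split.
  { apply Rmin_pos; [lra|]. apply Rmult_lt_0_compat; [|lra]. apply Rmult_lt_0_compat; nra. }
  intros u v Hu _.
  assert (Hu1 : Cmod (u - p) < A/2) by (eapply Rlt_le_trans; [exact Hu|apply Rmin_l]).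
  assert (Hu2 : Cmod (u - p) < e * (A * A) / 2) by (eapply Rlt_le_trans; [exact Hu|apply Rmin_r]).
  assert (HuA : A / 2 <= Cmod u).
  { assert (T := Cmod_sub_tri p u 0). replace (p - u)%C with (- (u - p))%C in T by ring.
    rewrite Cmod_opp in T. replace (p - 0)%C with p in T by ring. replace (u - 0)%C with u in T by ring.
    fold A in T. lra. }
  assert (Hu0 : u <> 0%C). { intros E. rewrite E, Cmod_0 in HuA. lra. }
  replace (/ u - / p)%C with ((p - u) / (u * p))%C by (field; auto).
  rewrite Cmod_div by (apply Cmult_neq_0; auto). rewrite Cmod_mult.
  replace (p - u)%C with (- (u - p))%C by ring. rewrite Cmod_opp. fold A.
  apply (Rmult_lt_reg_r (Cmod u * A)); [nra|].
  unfold Rdiv. rewrite Rmult_assoc, Rinv_l by nra. rewrite Rmult_1_r.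
  assert (A * A / 2 <= Cmod u * A) by nra.
  nra.
Qed.

Lemma cont1_inv (F : R -> C) x : cont1 F x -> F x <> 0%C -> cont1 (fun y => / F y)%C x.
Proof.
  intros HF H0. apply (cont1_comp2 (fun u _ => / u)%C F F); auto. apply cont2_inv; auto.
Qed.

Lemma cont1_nonzero (F : R -> C) x : cont1 F x -> F x <> 0%C ->
  exists d, 0 < d /\ forall y, Rabs (y - x) < d -> F y <> 0%C.
Proof.
  intros HF H0. assert (HA : 0 < Cmod (F x)) by (apply (proj1 (Cmod_gt_0 _)); exact H0).
  destruct (HF _ HA) as [d [Hd H]]. exists d. split; auto. intros y Hy E.
  specialize (H y Hy). rewrite E in H. replace (0 - F x)%C with (- F x)%C in H by ring.
  rewrite Cmod_opp in H. lra.
Qed.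

Lemma cara1 (u k : R -> C) x du : is_derive u x du -> cont1 k x ->
  is_derive (fun y => (u y - u x) * k y)%C x (du * k x)%C.
Proof.
  intros Hu Hk. apply is_derive_eps. intros e He.
  set (K := Cmod (k x) + Cmod du + 1).
  assert (HK : 1 <= K) by (unfold K; pose proof (Cmod_ge_0 (k x)); pose proof (Cmod_ge_0 du); lra).
  set (e' := Rmin 1 (e / (2 * K))).
  assert (He' : 0 < e') by (apply Rmin_pos; [lra|apply Rdiv_lt_0_compat; lra]).
  assert (He1 : e' <= 1) by apply Rmin_l.
  assert (He2 : e' <= e / (2 * K)) by apply Rmin_r.
  destruct (eps_is_derive u x du Hu e' He') as [d1 [Hd1 H1]].
  destruct (Hk e' He') as [d2 [Hd2 H2]].
  exists (Rmin d1 d2). split; [apply Rmin_pos; auto|]. intros y Hy.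
  assert (Hy1 : Rabs (y - x) < d1) by (eapply Rlt_le_trans; [exact Hy|apply Rmin_l]).
  assert (Hy2 : Rabs (y - x) < d2) by (eapply Rlt_le_trans; [exact Hy|apply Rmin_r]).
  specialize (H1 y Hy1). specialize (H2 y Hy2).
  replace ((u y - u x) * k y - (u x - u x) * k x - RtoC (y - x) * (du * k x))%C with
    ((u y - u x - RtoC (y - x) * du) * k y + RtoC (y - x) * du * (k y - k x))%C by ring.
  eapply Rle_trans; [apply Cmod_triangle|]. rewrite !Cmod_mult, Cmod_R.
  assert (Hky : Cmod (k y) <= Cmod (k x) + 1).
  { assert (T := Cmod_sub_tri (k y) (k x) 0). replace (k y - 0)%C with (k y) in T by ring.
    replace (k x - 0)%C with (k x) in T by ring. lra. }
  pose proof (Rabs_pos (y - x)). pose proof (Cmod_ge_0 du). pose proof (Cmod_ge_0 (k y)).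
  pose proof (Cmod_ge_0 (u y - u x - RtoC (y - x) * du)). pose proof (Cmod_ge_0 (k y - k x)).
  assert (A1 : Cmod (u y - u x - RtoC (y - x) * du) * Cmod (k y) <= e' * Rabs (y - x) * K).
  { apply Rmult_le_compat; auto. unfold K. lra. }
  assert (A2 : Rabs (y - x) * Cmod du * Cmod (k y - k x) <= Rabs (y - x) * K * e').
  { apply Rmult_le_compat; try lra. apply Rmult_le_pos; lra. apply Rmult_le_compat_l; auto. unfold K. lra. }
  assert (A3 : e' * K <= e / 2).
  { apply Rle_trans with (e / (2 * K) * K). apply Rmult_le_compat_r; lra. right. field. lra. }
  assert (e' * Rabs (y - x) * K + Rabs (y - x) * K * e' = 2 * (e' * K) * Rabs (y - x)) by ring.
  nra.
Qed.

Lemma C_plus_derive (f g : R -> C) x df dg : is_derive f x df -> is_derive g x dg ->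
  is_derive (fun y => f y + g y)%C x (df + dg)%C.
Proof. intros H1 H2. exact (is_derive_plus f g x df dg H1 H2). Qed.

Lemma C_const_derive (k : C) x : is_derive (fun _ : R => k) x (RtoC 0).
Proof. exact (@is_derive_const R_AbsRing (prod_NormedModule R_AbsRing R_NormedModule R_NormedModule) k x). Qed.

Lemma C_ext_loc (f g : R -> C) x l d : 0 < d -> (forall y, Rabs (y - x) < d -> f y = g y) ->
  is_derive f x l -> is_derive g x l.
Proof.
  intros Hd H Hf. apply (is_derive_ext_loc f g x l); auto.
  exists (mkposreal d Hd). intros y Hy. apply H. exact Hy.
Qed.

Lemma C_deriv_ext (f g : R -> C) x l l' : l = l' -> is_derive f x l -> (forall y, f y = g y) -> is_derive g x l'.
Proof. intros E H1 H2. rewrite <- E. exact (is_derive_ext f g x l H2 H1). Qed.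

Lemma cara2 (f u v k j : R -> C) x du dv d : 0 < d ->
  is_derive u x du -> is_derive v x dv -> cont1 k x -> cont1 j x ->
  (forall y, Rabs (y - x) < d -> (f y = f x + ((u y - u x) * k y + (v y - v x) * j y))%C) ->
  is_derive f x (du * k x + dv * j x)%C.
Proof.
  intros Hd Hu Hv Hk Hj Hf.
  apply (C_ext_loc (fun y => f x + ((u y - u x) * k y + (v y - v x) * j y))%C f x _ d Hd).
  { intros y Hy. symmetry. apply Hf; auto. }
  apply (C_deriv_ext (fun y => f x + ((u y - u x) * k y + (v y - v x) * j y))%C _ x (RtoC 0 + (du * k x + dv * j x))%C).
  { Cring. }
  - apply C_plus_derive. apply C_const_derive.
    apply C_plus_derive; apply cara1; auto.
  - reflexivity.
Qed.

Lemma C_mult_derive (f g : R -> C) x df dg : is_derive f x df -> is_derive g x dg ->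
  is_derive (fun y => f y * g y)%C x (df * g x + f x * dg)%C.
Proof.
  intros Hf Hg.
  apply (C_deriv_ext (fun y => f y * g y)%C _ x (df * g x + dg * (fun _ => f x) x)%C); [simpl; Cring| |reflexivity].
  apply (cara2 _ f g g (fun _ => f x) x df dg 1); auto; [lra|apply (deriv_cont1 g x dg Hg)|apply cont1_const|].
  intros y _. ring.
Qed.

Lemma C_inv_derive (F : R -> C) x dF : is_derive F x dF -> F x <> 0%C ->
  is_derive (fun y => / F y)%C x (- dF / (F x * F x))%C.
Proof.
  intros HF H0.
  assert (Hc := deriv_cont1 F x dF HF).
  destruct (cont1_nonzero F x Hc H0) as [d [Hd Hnz]].
  apply (C_deriv_ext (fun y => / F y)%C _ x (dF * (fun y => - (/ F y * / F x)) x + RtoC 0 * RtoC 0)%C);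
    [Cfield; auto| |reflexivity].
  apply (cara2 _ F (fun _ => RtoC 0) (fun y => - (/ F y * / F x))%C (fun _ => RtoC 0) x dF (RtoC 0) d); auto.
  - apply C_const_derive.
  - apply (cont1_comp2 (fun u v => - (u * v))%C (fun y => / F y)%C (fun _ => / F x)%C).
    + apply (cont2_mult (fun _ _ => RtoC (-1)) (fun u v => u * v)%C) || idtac.
      eapply cont2_ext; [|apply (cont2_mult (fun _ _ => RtoC (-1)) (fun u v => u * v)%C);
         [apply cont2_const|apply cont2_mult; [apply cont2_fst|apply cont2_snd]]].
      intros; simpl; ring.
    + apply cont1_inv; auto.
    + apply cont1_const.
  - apply cont1_const.
  - intros y Hy. specialize (Hnz y Hy). field. auto.
Qed.


Section Lift.
Variable a : nat -> C.
Variable m : nat.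
Variable B : R -> C.
Variable c : C.
Variable M' : R.
Hypothesis HM' : 0 <= M'.
Hypothesis HK' : forall x, M' < Rabs x -> B x = c.
Variable r : R.
Hypothesis Hr : 0 < r.
Hypothesis HKEY : forall x z0, poly_eval a m z0 = B x ->
    r <= Cmod (Qf a m z0 z0) /\
    forall z z', Cmod (z - z0) < r -> Cmod (z' - z0) < r ->
      Cmod (Qf a m z z' - Qf a m z0 z0) <= Cmod (Qf a m z0 z0) / 3.
Variable h : R.
Hypothesis Hh : 0 < h.
Hypothesis Huc : forall x y, Rabs (x - y) < h -> Cmod (B x - B y) < r * r / 6.
Variable zi : C.
Hypothesis Hzi : poly_eval a m zi = B (- M' - 1).

Definition rho := r * r / 6.
Definition s := h / 2.
Definition x0 := - M' - 1.
Definition xk (k : nat) := x0 + INR k * s.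

Lemma Hs : 0 < s. Proof. unfold s; lra. Qed.

Definition Phi (z0 w : C) : C :=
  epsilon (inhabits z0) (fun z => Cmod (z - z0) < r / 2 /\ poly_eval a m z = w).

Lemma Phi_spec z0 w x : poly_eval a m z0 = B x -> Cmod (w - poly_eval a m z0) < rho ->
  Cmod (Phi z0 w - z0) < r / 2 /\ poly_eval a m (Phi z0 w) = w.
Proof.
  intros H1 H2. unfold Phi. apply epsilon_spec.
  destruct (HKEY x z0 H1) as [K1 K2].
  apply (local_exists a m z0 r Hr K1 K2 w H2).
Qed.

Fixpoint zk (k : nat) : C :=
  match k with O => zi | S k => Phi (zk k) (B (xk (S k))) end.

Lemma zk_good k : poly_eval a m (zk k) = B (xk k).
Proof.
  induction k as [|k IH].
  - simpl. unfold xk, x0. simpl. rewrite Hzi. f_equal. ring.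
  - simpl. apply (Phi_spec _ _ (xk k) IH). rewrite IH. apply Huc.
    unfold xk. rewrite S_INR. replace (x0 + (INR k + 1) * s - (x0 + INR k * s)) with s by ring.
    pose proof Hs. unfold s in *. rewrite Rabs_right; lra.
Qed.

Lemma zk_step k : Cmod (zk (S k) - zk k) < r / 2.
Proof.
  simpl. apply (Phi_spec _ _ (xk k) (zk_good k)). rewrite zk_good. apply Huc.
  unfold xk. rewrite S_INR. replace (x0 + (INR k + 1) * s - (x0 + INR k * s)) with s by ring.
  pose proof Hs. unfold s in *. rewrite Rabs_right; lra.
Qed.

Definition idx (x : R) : nat := Z.to_nat (up ((x - x0) / s) - 1).

Lemma idx_spec x : x0 <= x -> xk (idx x) <= x < xk (idx x) + s.
Proof.
  intros Hx. pose proof Hs.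
  set (t := (x - x0) / s).
  assert (Ht : 0 <= t) by (unfold t; apply Rdiv_le_0_compat; lra).
  destruct (archimed t) as [A1 A2].
  assert (Hu : (1 <= up t)%Z).
  { assert (0 < up t)%Z by (apply lt_IZR; simpl; lra). lia. }
  assert (E : INR (idx x) = IZR (up t) - 1).
  { unfold idx. fold t. rewrite INR_IZR_INZ, Z2Nat.id by lia. rewrite minus_IZR. reflexivity. }
  unfold xk. rewrite E.
  assert (Ex : x = x0 + t * s) by (unfold t; field; lra).
  split; rewrite Ex at 2 || rewrite Ex; nra.
Qed.

Lemma idx_lt x : x < x0 -> idx x = 0%nat.
Proof.
  intros Hx. pose proof Hs.
  set (t := (x - x0) / s).
  assert (Ht : t < 0).
  { unfold t. unfold Rdiv. apply Rmult_neg_pos; [lra|]. apply Rinv_0_lt_compat; lra. }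
  destruct (archimed t) as [A1 A2].
  assert (Hu : (up t < 1)%Z) by (apply lt_IZR; simpl; lra).
  unfold idx. fold t. lia.
Qed.

Lemma idx_near x y : Rabs (x - y) < s -> (idx y <= S (idx x))%nat.
Proof.
  intros Hxy. pose proof Hs.
  assert (Hxy' : y < x + s) by (unfold Rabs in Hxy; destruct Rcase_abs in Hxy; lra).
  destruct (Rlt_le_dec y x0) as [Hy|Hy]. { rewrite (idx_lt y Hy). lia. }
  destruct (idx_spec y Hy) as [Y1 Y2].
  destruct (Rlt_le_dec x x0) as [Hx|Hx].
  - rewrite (idx_lt x Hx). unfold xk in Y1.
    assert (INR (idx y) * s < s) by lra.
    assert (INR (idx y) < 1) by nra.
    assert (idx y < 1)%nat by (apply INR_lt; simpl; lra). lia.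
  - destruct (idx_spec x Hx) as [X1 X2]. unfold xk in *.
    assert ((INR (idx y) - INR (idx x)) * s < 2 * s) by lra.
    assert (INR (idx y) < INR (idx x) + 2) by nra.
    assert (idx y < idx x + 2)%nat.
    { apply INR_lt. rewrite plus_INR. simpl. lra. }
    lia.
Qed.

Definition gl (x : R) : C := Phi (zk (idx x)) (B x).

Lemma near_node x : Cmod (B x - B (xk (idx x))) < rho.
Proof.
  pose proof Hs.
  destruct (Rlt_le_dec x x0) as [Hx|Hx].
  - rewrite (idx_lt x Hx). unfold xk. simpl. rewrite Rmult_0_l, Rplus_0_r.
    unfold x0 in *. rewrite (HK' x), (HK' (- M' - 1)).
    + replace (c - c)%C with (RtoC 0) by ring. rewrite Cmod_0. unfold rho. nra.
    + rewrite Rabs_left; lra.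
    + rewrite Rabs_left; lra.
  - destruct (idx_spec x Hx). apply Huc. unfold s in *. rewrite Rabs_right; lra.
Qed.

Lemma gl_spec x : Cmod (gl x - zk (idx x)) < r / 2 /\ poly_eval a m (gl x) = B x.
Proof.
  unfold gl. apply (Phi_spec _ _ (xk (idx x)) (zk_good _)). rewrite zk_good. apply near_node.
Qed.

Lemma node_close k l : (l <= S k)%nat -> (k <= S l)%nat -> Cmod (zk l - zk k) < r / 2.
Proof.
  intros H1 H2.
  destruct (Nat.eq_dec l k) as [E|E].
  - subst. replace (zk k - zk k)%C with (RtoC 0) by ring. rewrite Cmod_0. lra.
  - destruct (Nat.eq_dec l (S k)) as [E'|E'].
    + subst. apply zk_step.
    + assert (k = S l) by lia. subst.
      replace (zk l - zk (S l))%C with (- (zk (S l) - zk l))%C by ring. rewrite Cmod_opp. apply zk_step.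
Qed.

Lemma gl_lip x y : Rabs (x - y) < s ->
  Cmod (gl y - zk (idx x)) < r /\ 2 * r / 3 * Cmod (gl x - gl y) <= Cmod (B x - B y).
Proof.
  intros Hxy.
  assert (N1 := idx_near x y Hxy).
  assert (N2 := idx_near y x ltac:(rewrite Rabs_minus_sym; exact Hxy)).
  assert (C1 := node_close (idx x) (idx y) N1 N2).
  destruct (gl_spec x) as [G1 P1]. destruct (gl_spec y) as [G2 P2].
  assert (Hy : Cmod (gl y - zk (idx x)) < r).
  { assert (T := Cmod_sub_tri (gl y) (zk (idx y)) (zk (idx x))). lra. }
  split; auto.
  destruct (HKEY _ _ (zk_good (idx x))) as [K1 K2].
  rewrite <- P1, <- P2. apply (local_lip a m (zk (idx x)) r K1 K2); lra.
Qed.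

Hypothesis HBc : forall x, cont1 B x.

Lemma gl_cont x : cont1 gl x.
Proof.
  intros e He. pose proof Hs.
  destruct (HBc x (2 * r / 3 * e)) as [d [Hd HB]]. { apply Rmult_lt_0_compat; lra. }
  exists (Rmin d s). split. { apply Rmin_pos; lra. }
  intros y Hy.
  assert (Hy1 : Rabs (y - x) < d) by (eapply Rlt_le_trans; [exact Hy|apply Rmin_l]).
  assert (Hy2 : Rabs (x - y) < s) by (rewrite Rabs_minus_sym; eapply Rlt_le_trans; [exact Hy|apply Rmin_r]).
  destruct (gl_lip x y Hy2) as [_ L].
  specialize (HB y Hy1).
  replace (B x - B y)%C with (- (B y - B x))%C in L by ring. rewrite Cmod_opp in L.
  replace (gl x - gl y)%C with (- (gl y - gl x))%C in L by ring. rewrite Cmod_opp in L.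
  assert (0 < 2 * r / 3) by lra. nra.
Qed.

Lemma Qgl_nonzero x y : Rabs (x - y) < s -> Qf a m (gl y) (gl x) <> 0%C.
Proof.
  intros Hxy. destruct (gl_lip x y Hxy) as [G2 _]. destruct (gl_spec x) as [G1 _].
  destruct (HKEY _ _ (zk_good (idx x))) as [K1 K2].
  specialize (K2 (gl y) (gl x) G2 ltac:(lra)).
  intros E. rewrite E in K2. replace (0 - Qf a m (zk (idx x)) (zk (idx x)))%C with
    (- Qf a m (zk (idx x)) (zk (idx x)))%C in K2 by ring. rewrite Cmod_opp in K2. lra.
Qed.

Lemma gl_deriv x dB : is_derive B x dB ->
  is_derive gl x (dB * / Qf a m (gl x) (gl x))%C.
Proof.
  intros HdB. pose proof Hs.
  apply (C_deriv_ext gl gl x (dB * (fun y => / Qf a m (gl y) (gl x)) x + RtoC 0 * RtoC 0)%C);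
    [simpl; Cring| |reflexivity].
  apply (cara2 gl B (fun _ => RtoC 0) (fun y => / Qf a m (gl y) (gl x))%C (fun _ => RtoC 0) x dB (RtoC 0) s); auto.
  - apply C_const_derive.
  - apply cont1_inv.
    + apply (cont1_comp2 (Qf a m) gl (fun _ => gl x)). apply cont2_Qf. apply gl_cont. apply cont1_const.
    + apply Qgl_nonzero. rewrite Rminus_diag, Rabs_R0. exact Hs.
  - apply cont1_const.
  - intros y Hy. 
    assert (Hxy : Rabs (x - y) < s) by (rewrite Rabs_minus_sym; exact Hy).
    assert (Hnz := Qgl_nonzero x y Hxy).
    destruct (gl_spec x) as [_ P1]. destruct (gl_spec y) as [_ P2].
    assert (E := P_diff a m (gl y) (gl x)). rewrite P1, P2 in E.
    rewrite E. field. exact Hnz.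
Qed.

End Lift.


Inductive ex : Type :=
| Cst (c : C) | VB (k : nat) | Gv | Hv | Add (e1 e2 : ex) | Mul (e1 e2 : ex).

Section Smooth.
Variable DB : nat -> R -> C.
Hypothesis HDB : forall n x, is_derive (DB n) x (DB (S n) x).
Variable g : R -> C.
Variable b : nat -> C.
Variable n : nat.
Definition Fp (x : R) : C := poly_eval b n (g x).
Hypothesis HF0 : forall x, Fp x <> 0%C.
Hypothesis Hg : forall x, is_derive g x (DB 1%nat x * / Fp x)%C.

Fixpoint eval (e : ex) (x : R) : C :=
  match e with
  | Cst c => c
  | VB k => DB k x
  | Gv => g x
  | Hv => / Fp x
  | Add e1 e2 => eval e1 x + eval e2 x
  | Mul e1 e2 => eval e1 x * eval e2 x
  end%C.

Fixpoint der0 (e : ex) : ex :=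
  match e with
  | Cst _ => Cst (RtoC 0)
  | VB k => VB (S k)
  | Gv => Mul (VB 1) Hv
  | Hv => Cst (RtoC 0)
  | Add e1 e2 => Add (der0 e1) (der0 e2)
  | Mul e1 e2 => Add (Mul (der0 e1) e2) (Mul e1 (der0 e2))
  end.

Fixpoint Pw (k : nat) : ex := match k with O => Cst (RtoC 1) | S k => Mul Gv (Pw k) end.
Fixpoint EP (k : nat) : ex :=
  match k with
  | O => Mul (Cst (b 0%nat)) (Pw 0)
  | S k => Add (EP k) (Mul (Cst (b (S k))) (Pw (S k)))
  end.

Fixpoint noH (e : ex) : Prop :=
  match e with
  | Hv => False
  | Add e1 e2 | Mul e1 e2 => noH e1 /\ noH e2
  | _ => True
  end.

Lemma Pw_eval k x : eval (Pw k) x = Cpow (g x) k.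
Proof. induction k; simpl; [reflexivity|]. rewrite IHk. reflexivity. Qed.

Lemma EP_eval k x : eval (EP k) x = poly_eval b k (g x).
Proof.
  unfold poly_eval. induction k.
  - rewrite sum_n_0_C. simpl. reflexivity.
  - rewrite sum_n_S_C. simpl. rewrite IHk, Pw_eval. reflexivity.
Qed.

Lemma EP_noH k : noH (EP k).
Proof.
  assert (forall j, noH (Pw j)) by (induction j; simpl; auto).
  induction k; simpl; auto.
Qed.

Lemma der0_ok e x : noH e -> is_derive (eval e) x (eval (der0 e) x).
Proof.
  induction e; simpl; intros Hn.
  - apply C_const_derive.
  - apply HDB.
  - apply Hg.
  - contradiction.
  - destruct Hn as [H1 H2]. apply C_plus_derive; auto.
  - destruct Hn as [H1 H2].
    apply (C_deriv_ext _ _ x _ _ eq_refl (C_mult_derive _ _ x _ _ (IHe1 H1) (IHe2 H2))). reflexivity.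
Qed.

Fixpoint der (e : ex) : ex :=
  match e with
  | Cst _ => Cst (RtoC 0)
  | VB k => VB (S k)
  | Gv => Mul (VB 1) Hv
  | Hv => Mul (Cst (RtoC (-1))) (Mul (der0 (EP n)) (Mul Hv Hv))
  | Add e1 e2 => Add (der e1) (der e2)
  | Mul e1 e2 => Add (Mul (der e1) e2) (Mul e1 (der e2))
  end.

Lemma der_ok e x : is_derive (eval e) x (eval (der e) x).
Proof.
  induction e; simpl.
  - apply C_const_derive.
  - apply HDB.
  - apply Hg.
  - assert (HF : is_derive Fp x (eval (der0 (EP n)) x)).
    { apply (C_deriv_ext (eval (EP n)) Fp x _ _ eq_refl).
      apply der0_ok, EP_noH. intros y. rewrite EP_eval. reflexivity. }
    apply (C_deriv_ext (fun y => / Fp y)%C _ x (- eval (der0 (EP n)) x / (Fp x * Fp x))%C).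
    + Cfield. apply HF0.
    + apply C_inv_derive; auto.
    + reflexivity.
  - apply C_plus_derive; auto.
  - apply (C_deriv_ext _ _ x _ _ eq_refl (C_mult_derive _ _ x _ _ IHe1 IHe2)). reflexivity.
Qed.

Lemma g_smooth : smooth_RC g.
Proof.
  exists (fun k => eval (Nat.iter k der Gv)). split.
  - reflexivity.
  - intros k x. simpl. apply der_ok.
Qed.

End Smooth.


Theorem lemma19 (a : nat -> C) (m : nat) (B : R -> C) :
  (1 <= m)%nat ->
  a m <> 0%C ->
  smooth_RC B ->
  const_outside_compact B ->
  (forall (x : R) (z : C),
      poly_eval (poly_deriv_coef a) (m - 1) z = 0%C -> B x <> poly_eval a m z) ->
  exists g : R -> C, smooth_RC g /\ forall x : R, poly_eval a m (g x) = B x.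
Proof.
  intros Hm Ham [DB [HDB0 HDB]] [c [M HBk]] Hcrit.
  assert (HBc : forall x, cont1 B x).
  { intros x. apply (deriv_cont1 B x (DB 1%nat x)). rewrite <- HDB0. apply HDB. }
  assert (Hcrit' : forall x z, Qf a m z z = 0%C -> B x <> poly_eval a m z).
  { intros x z H. apply Hcrit. rewrite <- Q_diag by exact Hm. exact H. }
  destruct (KEY a m Hm Ham B c M HBc HBk Hcrit') as [r [Hr HKEY]].
  destruct (HM0 B c M HBk) as [M' [HM' HK']].
  destruct (B_unif_cont B c M HBc HBk (r * r / 6)) as [h [Hh Huc]].
  { apply Rdiv_lt_0_compat; nra. }
  assert (Huc' : forall x y, Rabs (x - y) < h -> Cmod (B x - B y) < r * r / 6) by exact Huc.
  destruct (fta_poly a m (B (- M' - 1)) Hm Ham) as [zi Hzi].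
  exists (gl a m B M' r h zi). split.
  - apply (g_smooth DB HDB (gl a m B M' r h zi) (poly_deriv_coef a) (m - 1)).
    + intros x. unfold Fp. rewrite <- Q_diag by exact Hm.
      apply (Qgl_nonzero a m B c M' HM' HK' r Hr HKEY h Hh Huc' zi Hzi x x).
      rewrite Rminus_diag, Rabs_R0. apply Hs; auto.
    + intros x. unfold Fp. rewrite <- Q_diag by exact Hm.
      apply (gl_deriv a m B c M' HM' HK' r Hr HKEY h Hh Huc' zi Hzi HBc x).
      rewrite <- HDB0. apply HDB.
  - intros x. apply (gl_spec a m B c M' HM' HK' r Hr HKEY h Hh Huc' zi Hzi x).
Qed.
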